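(* Let $\mathfrak A=\{(a,\alpha)\in\mathbb R^2:-1\le\alpha<a\le1\}$ and $\Omega=\{(\lambda,\mu)\in\mathbb R^2:\lambda\ge1,\ \mu\ge1\}$. Consider the system $$ \begin{cases} 2\,(a+\alpha)(3-a\alpha-a-\alpha)(3-a\alpha+a+\alpha)+(\lambda-\mu)(a-\alpha)^3=0,\\ (\lambda+\mu)^2(a-\alpha)^6=4\,(3+a\alpha)^3(1-a\alpha)(2+a+\alpha)(2-a-\alpha). \end{cases} $$ This system defines a one-to-one correspondence between $\mathfrak A$ and $\Omega$ (for each $(a,\alpha)\in\mathfrak A$ there is exactly one $(\lambda,\mu)\in\Omega$ solving it together with $(a,\alpha)$, and this assignment is a bijection $\mathfrak A\to\Omega$). Moreover, this bijection maps $\{(a,\alpha):-1<\alpha<a<1\}$ onto the interior $\{\lambda>1,\mu>1\}$ of $\Omega$, the side $\{a=1\}$ of $\mathfrak A$ onto the ray $\{\lambda=1\}\subset\Omega$, the side $\{\alpha=-1\}$ onto the ray $\{\mu=1\}\subset\Omega$, and the vertex $(a,\alpha)=(1,-1)$ onto the point $(\lambda,\mu)=(1,1)$. *)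

(* Defs.v *)
From Stdlib Require Export Reals.
Open Scope R_scope.

Definition inA (a al : R) : Prop := -1 <= al /\ al < a /\ a <= 1.

Definition inOmega (l m : R) : Prop := 1 <= l /\ 1 <= m.

Definition sys (a al l m : R) : Prop :=
  2 * (a + al) * (3 - a * al - a - al) * (3 - a * al + a + al)
    + (l - m) * (a - al) ^ 3 = 0
  /\
  (l + m) ^ 2 * (a - al) ^ 6
    = 4 * (3 + a * al) ^ 3 * (1 - a * al) * (2 + a + al) * (2 - a - al).

(* Main.v *)
Require Import Defs.
From Stdlib Require Import Reals.
From Coquelicot Require Import Coquelicot.
From Stdlib Require Import Reals Lra Psatz ClassicalEpsilon.
Open Scope R_scope.
Set Bullet Behavior "Strict Subproofs".

Definition Q (a b : R) : R := (3 + a*b)^3 * (1 - a*b) * (2 + a + b) * (2 - a - b).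
Definition Dd (a b : R) : R := (a+b)*(3 - a*b - a - b)*(3 - a*b + a + b).
Definition Qa (a b : R) : R :=
  3*(3+a*b)^2*b*(1-a*b)*(2+a+b)*(2-a-b) - b*(3+a*b)^3*(2+a+b)*(2-a-b)
  + (3+a*b)^3*(1-a*b)*(2-a-b) - (3+a*b)^3*(1-a*b)*(2+a+b).
Definition Da (a b : R) : R :=
  (3-a*b-a-b)*(3-a*b+a+b) + (a+b)*(-b-1)*(3-a*b+a+b) + (a+b)*(3-a*b-a-b)*(1-b).
Definition H1r (x y z : R) : R := (11/2)*(y*z^9) + (53/2)*(y^2*z^8) + (147/2)*(y^3*z^7) + 129*(y^4*z^6) + 147*(y^5*z^5) + 106*(y^6*z^4) + 44*(y^7*z^3) + 8*(y^8*z^2) + (11/2)*(x*z^9) + 53*(x*y*z^8) + (445/2)*(x*y^2*z^7) + 534*(x*y^3*z^6) + 804*(x*y^4*z^5) + 780*(x*y^5*z^4) + 479*(x*y^6*z^3) + 172*(x*y^7*z^2) + 28*(x*y^8*z) + 26*(x^2*z^8) + 220*(x^2*y*z^7) + 801*(x^2*y^2*z^6) + 1641*(x^2*y^3*z^5) + (4131/2)*(x^2*y^4*z^4) + (3255/2)*(x^2*y^5*z^3) + 778*(x^2*y^6*z^2) + 206*(x^2*y^7*z) + 24*(x^2*y^8) + 69*(x^3*z^7) + 516*(x^3*y*z^6) + 1617*(x^3*y^2*z^5) + 2770*(x^3*y^3*z^4) + (5605/2)*(x^3*y^4*z^3) + 1676*(x^3*y^5*z^2) + 546*(x^3*y^6*z)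 + 72*(x^3*y^7) + (225/2)*(x^4*z^6) + (1503/2)*(x^4*y*z^5) + (4005/2)*(x^4*y^2*z^4) + (5551/2)*(x^4*y^3*z^3) + 2122*(x^4*y^4*z^2) + 850*(x^4*y^5*z) + 144*(x^4*y^6) + (231/2)*(x^5*z^5) + 699*(x^5*y*z^4) + (3117/2)*(x^5*y^2*z^3) + 1648*(x^5*y^3*z^2) + 854*(x^5*y^4*z) + 168*(x^5*y^5) + 73*(x^6*z^4) + 407*(x^6*y*z^3) + 746*(x^6*y^2*z^2) + 534*(x^6*y^3*z) + 144*(x^6*y^4) + 26*(x^7*z^3) + 136*(x^7*y*z^2) + 202*(x^7*y^2*z) + 72*(x^7*y^3) + 4*(x^8*z^2) + 20*(x^8*y*z) + 24*(x^8*y^2).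
Definition H2r (x y z : R) : R := (15/2)*(y*z^11) + (93/2)*(y^2*z^10) + (315/2)*(y^3*z^9) + 321*(y^4*z^8) + 405*(y^5*z^7) + 310*(y^6*z^6) + 132*(y^7*z^5) + 24*(y^8*z^4) + (11/2)*(x*z^11) + 77*(x*y*z^10) + (881/2)*(x*y^2*z^9) + 1374*(x*y^3*z^8) + 2592*(x*y^4*z^7) + 3060*(x*y^5*z^6) + 2225*(x*y^6*z^5) + 916*(x*y^7*z^4) + 164*(x*y^8*z^3) + 26*(x^2*z^10) + 344*(x^2*y*z^9) + 1827*(x^2*y^2*z^8) + 5241*(x^2*y^3*z^7) + (18099/2)*(x^2*y^4*z^6) + (19551/2)*(x^2*y^5*z^5) + 6544*(x^2*y^6*z^4) + 2518*(x^2*y^7*z^3) + 432*(x^2*y^8*z^2) + 69*(x^3*z^9) + 876*(x^3*y*z^8) + 4347*(x^3*y^2*z^7) + 11422*(x^3*y^3*z^6) + (35541/2)*(x^3*y^4*z^5) + 17016*(x^3*y^5*z^4) + 9936*(x^3*y^6*z^3) + 3312*(x^3*y^7*z^2) + 504*(x^3*y^8*z) + (225/2)*(x^4*z^8) + (2787/2)*(x^4*y*z^7) + (13017/2)*(x^4*y^2*z^6) + (31147/2)*(x^4*y^3*z^5) + 21382*(x^4*y^4*z^4) + 17420*(x^4*y^5*z^3) + 8190*(x^4*y^6*z^2) + 2016*(x^4*y^7*z) + 216*(x^4*y^8) + (231/2)*(x^5*z^7) + 1419*(x^5*y*z^6) + (12597/2)*(x^5*y^2*z^5) + 13648*(x^5*y^3*z^4)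 + 16060*(x^5*y^4*z^3) + 10476*(x^5*y^5*z^2) + 3528*(x^5*y^6*z) + 432*(x^5*y^7) + 73*(x^6*z^6) + 903*(x^6*y*z^5) + 3858*(x^6*y^2*z^4) + 7560*(x^6*y^3*z^3) + 7326*(x^6*y^4*z^2) + 3384*(x^6*y^5*z) + 648*(x^6*y^6) + 26*(x^7*z^5) + 328*(x^7*y*z^4) + 1370*(x^7*y^2*z^3) + 2448*(x^7*y^3*z^2) + 1872*(x^7*y^4*z) + 432*(x^7*y^5) + 4*(x^8*z^4) + 52*(x^8*y*z^3) + 216*(x^8*y^2*z^2) + 360*(x^8*y^3*z) + 216*(x^8*y^4).
Definition HEr (x y z : R) : R := (5/2)*(y*z^7) + (25/4)*(y^2*z^6) + 6*(y^3*z^5) + 2*(y^4*z^4) + (5/2)*(x*z^7) + (57/2)*(x*y*z^6) + 84*(x*y^2*z^5) + 94*(x*y^3*z^4) + 36*(x*y^4*z^3) + (25/4)*(x^2*z^6) + 84*(x^2*y*z^5) + 276*(x^2*y^2*z^4) + 342*(x^2*y^3*z^3) + 144*(x^2*y^4*z^2) + 6*(x^3*z^5) + 94*(x^3*y*z^4) + 342*(x^3*y^2*z^3) + 468*(x^3*y^3*z^2) + 216*(x^3*y^4*z) + 2*(x^4*z^4) + 36*(x^4*y*z^3) + 144*(x^4*y^2*z^2) + 216*(x^4*y^3*z) + 108*(x^4*y^4).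
Definition HEs (x y z : R) : R := (1/4)*(z^8) + (5/2)*(y*z^7) + (25/4)*(y^2*z^6) + 6*(y^3*z^5) + 2*(y^4*z^4) + (5/2)*(x*z^7) + (57/2)*(x*y*z^6) + 84*(x*y^2*z^5) + 94*(x*y^3*z^4) + 36*(x*y^4*z^3) + (25/4)*(x^2*z^6) + 84*(x^2*y*z^5) + 276*(x^2*y^2*z^4) + 342*(x^2*y^3*z^3) + 144*(x^2*y^4*z^2) + 6*(x^3*z^5) + 94*(x^3*y*z^4) + 342*(x^3*y^2*z^3) + 468*(x^3*y^3*z^2) + 216*(x^3*y^4*z) + 2*(x^4*z^4) + 36*(x^4*y*z^3) + 144*(x^4*y^2*z^2) + 216*(x^4*y^3*z).

Lemma P1_eq a b : 6 * Q a b - Qa a b * (a - b) = 1/2 * (a-b)^10 + H1r (1-a) (1+b) (a-b).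
Proof. unfold Q, Qa, H1r. field. Qed.
Lemma P2_eq a b : 2 * Da a b * Q a b - Dd a b * Qa a b = 1/2 * (a-b)^12 + H2r (1-a) (1+b) (a-b).
Proof. unfold Q, Qa, Da, Dd, H2r. field. Qed.
Lemma E_eq a b : Q a b - Dd a b ^ 2 = 1/4 * (a-b)^8 + HEr (1-a) (1+b) (a-b).
Proof. unfold Q, Dd, HEr. field. Qed.
Lemma E_eq2 a b : Q a b - Dd a b ^ 2 = 108 * ((1-a)^4 * (1+b)^4) + HEs (1-a) (1+b) (a-b).
Proof. unfold Q, Dd, HEs. field. Qed.

Ltac posit := repeat match goal with
  | |- 0 <= _ + _ => apply Rplus_le_le_0_compat
  | |- 0 <= _ * _ => apply Rmult_le_pos
  | |- 0 <= _ ^ _ => apply pow_le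
  | |- 0 <= _ / _ => apply Rmult_le_pos; [|apply Rlt_le, Rinv_0_lt_compat]
  | |- _ => lra
  end.

Lemma H1r_pos x y z : 0 <= x -> 0 <= y -> 0 <= z -> 0 <= H1r x y z.
Proof. intros; unfold H1r; posit. Qed.
Lemma H2r_pos x y z : 0 <= x -> 0 <= y -> 0 <= z -> 0 <= H2r x y z.
Proof. intros; unfold H2r; posit. Qed.
Lemma HEr_pos x y z : 0 <= x -> 0 <= y -> 0 <= z -> 0 <= HEr x y z.
Proof. intros; unfold HEr; posit. Qed.
Lemma HEs_pos x y z : 0 <= x -> 0 <= y -> 0 <= z -> 0 <= HEs x y z.
Proof. intros; unfold HEs; posit. Qed.

Lemma is_derive_eq (f : R -> R) x l l' : is_derive f x l -> l = l' -> is_derive f x l'.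
Proof. intros H ->; exact H. Qed.

Lemma dQ a b : is_derive (fun a => Q a b) a (Qa a b).
Proof. unfold Q, Qa. auto_derive. auto. ring. Qed.
Lemma dD a b : is_derive (fun a => Dd a b) a (Da a b).
Proof. unfold Dd, Da. auto_derive. auto. ring. Qed.
Lemma dpow6 a b : is_derive (fun a => (a-b)^6) a (6*(a-b)^5).
Proof. auto_derive. auto. ring. Qed.

Definition U a b := Q a b / (a-b)^6.
Definition K a b := Dd a b / sqrt (Q a b).

Lemma dU a b : a - b <> 0 -> is_derive (fun a => U a b) a (- (6 * Q a b - Qa a b * (a - b)) / (a-b)^7).
Proof. intros H. unfold U.
  eapply is_derive_eq. apply (is_derive_div _ _ _ _ _ (dQ a b) (dpow6 a b)).
  { apply pow_nonzero; auto. }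
  change (@eq R ((Qa a b * (a - b) ^ 6 - Q a b * (6 * (a - b) ^ 5)) / ((a - b) ^ 6) ^ 2) (- (6 * Q a b - Qa a b * (a - b)) / (a - b) ^ 7)). field. auto.
Qed.

Lemma dK a b : 0 < Q a b -> is_derive (fun a => K a b) a
   ((2 * Da a b * (sqrt (Q a b) * sqrt (Q a b)) - Dd a b * Qa a b) / (2 * sqrt (Q a b) ^ 3)).
Proof. intros H. unfold K.
  assert (hs : 0 < sqrt (Q a b)) by (apply sqrt_lt_R0; auto).
  eapply is_derive_eq. apply (is_derive_div _ _ _ _ _ (dD a b) (is_derive_sqrt _ _ _ (dQ a b) H)).
  { apply Rgt_not_eq; lra. }
  match goal with |- ?A = ?B => change (@eq R A B) end. field. lra.
Qed.

Ltac Rfield := match goal with |- ?A = ?B => change (@eq R A B) end; field.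

Lemma decr_deriv (f f' : R -> R) lo hi : lo < hi ->
  (forall c, lo <= c <= hi -> is_derive f c (f' c)) ->
  (forall c, lo < c < hi -> f' c < 0) -> f hi < f lo.
Proof. intros H Hd Hn.
  destruct (MVT_cor2 f f' lo hi H) as [c [e hc]].
  { intros c hc; apply is_derive_Reals; auto. }
  assert (f' c < 0) by auto. nra.
Qed.
Lemma incr_deriv (f f' : R -> R) lo hi : lo < hi ->
  (forall c, lo <= c <= hi -> is_derive f c (f' c)) ->
  (forall c, lo < c < hi -> 0 < f' c) -> f lo < f hi.
Proof. intros H Hd Hn.
  destruct (MVT_cor2 f f' lo hi H) as [c [e hc]].
  { intros c hc; apply is_derive_Reals; auto. }
  assert (0 < f' c) by auto. nra.
Qed.

Lemma E_pos a b : inA a b -> Dd a b ^ 2 < Q a b.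
Proof. intros [h1 [h2 h3]].
  assert (0 <= HEr (1-a) (1+b) (a-b)) by (apply HEr_pos; lra).
  assert (0 < (a-b)^8) by (apply pow_lt; lra).
  pose proof (E_eq a b). lra.
Qed.
Lemma Q_pos a b : inA a b -> 0 < Q a b.
Proof. intros h. pose proof (E_pos a b h). assert (0 <= Dd a b ^ 2) by (apply pow2_ge_0). lra. Qed.
Lemma P1_pos a b : inA a b -> 0 < 6 * Q a b - Qa a b * (a - b).
Proof. intros [h1 [h2 h3]].
  assert (0 <= H1r (1-a) (1+b) (a-b)) by (apply H1r_pos; lra).
  assert (0 < (a-b)^10) by (apply pow_lt; lra).
  pose proof (P1_eq a b). lra.
Qed.
Lemma P2_pos a b : inA a b -> 0 < 2 * Da a b * Q a b - Dd a b * Qa a b.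
Proof. intros [h1 [h2 h3]].
  assert (0 <= H2r (1-a) (1+b) (a-b)) by (apply H2r_pos; lra).
  assert (0 < (a-b)^12) by (apply pow_lt; lra).
  pose proof (P2_eq a b). lra.
Qed.

Lemma U_decr b x y : -1 <= b -> b < x -> x < y -> y <= 1 -> U y b < U x b.
Proof. intros h1 h2 h3 h4.
  apply (decr_deriv (fun a => U a b) (fun a => - (6 * Q a b - Qa a b * (a - b)) / (a-b)^7)); auto.
  { intros c hc. apply dU. lra. }
  intros c hc. assert (0 < 6 * Q c b - Qa c b * (c - b)) by (apply P1_pos; red; lra).
  assert (0 < (c-b)^7) by (apply pow_lt; lra).
  unfold Rdiv. rewrite Ropp_mult_distr_l_reverse. apply Ropp_lt_gt_0_contravar.
  apply Rmult_lt_0_compat; auto. apply Rinv_0_lt_compat; auto.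
Qed.

Lemma K_incr b x y : -1 <= b -> b < x -> x < y -> y <= 1 -> K x b < K y b.
Proof. intros h1 h2 h3 h4.
  apply (incr_deriv (fun a => K a b) (fun a => (2 * Da a b * (sqrt (Q a b) * sqrt (Q a b)) - Dd a b * Qa a b) / (2 * sqrt (Q a b) ^ 3))); auto.
  { intros c hc. apply dK. apply Q_pos; red; lra. }
  intros c hc. assert (hq : 0 < Q c b) by (apply Q_pos; red; lra).
  rewrite sqrt_sqrt by lra.
  assert (0 < 2 * Da c b * Q c b - Dd c b * Qa c b) by (apply P2_pos; red; lra).
  assert (0 < sqrt (Q c b)) by (apply sqrt_lt_R0; auto).
  apply Rdiv_lt_0_compat; auto. assert (0 < sqrt (Q c b) ^3) by (apply pow_lt; auto). lra.
Qed.

Ltac fside := repeat split; (try apply pow_nonzero); lra.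

Definition lam a b := (sqrt (Q a b) - Dd a b) / (a-b)^3.
Definition mu a b := (sqrt (Q a b) + Dd a b) / (a-b)^3.
Definition Wv a b := sqrt (Q a b) / (a-b)^3.

Lemma Q_sym a b : Q (-b) (-a) = Q a b. Proof. unfold Q; ring. Qed.
Lemma Dd_sym a b : Dd (-b) (-a) = - Dd a b. Proof. unfold Dd; ring. Qed.
Lemma mu_sym a b : mu a b = lam (-b) (-a).
Proof. unfold mu, lam. rewrite Q_sym, Dd_sym. replace (- b - - a) with (a-b) by ring.
  unfold Rdiv; ring. Qed.
Lemma U_sym a b : U (-b) (-a) = U a b.
Proof. unfold U. rewrite Q_sym. replace (- b - - a) with (a-b) by ring. reflexivity. Qed.
Lemma K_sym a b : K (-b) (-a) = - K a b.
Proof. unfold K. rewrite Q_sym, Dd_sym. unfold Rdiv. ring. Qed.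

Lemma inA_sym a b : inA a b -> inA (-b) (-a).
Proof. unfold inA; lra. Qed.

Lemma sqrtQ_pos a b : inA a b -> 0 < sqrt (Q a b).
Proof. intros h; apply sqrt_lt_R0, Q_pos; auto. Qed.
Lemma Dd_lt a b : inA a b -> Dd a b < sqrt (Q a b) /\ - sqrt (Q a b) < Dd a b.
Proof. intros h. pose proof (E_pos a b h). pose proof (sqrtQ_pos a b h).
  pose proof (sqrt_sqrt (Q a b) (Rlt_le _ _ (Q_pos a b h))). nra. Qed.

Lemma lam_WK a b : inA a b -> lam a b = Wv a b * (1 - K a b).
Proof. intros h. pose proof (sqrtQ_pos a b h). destruct h as [h1 [h2 h3]].
  unfold lam, Wv, K. field. repeat split; (try apply pow_nonzero); lra. Qed.

Lemma Wv_sq a b : inA a b -> Wv a b ^ 2 = U a b.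
Proof. intros h. pose proof (Q_pos a b h). destruct h as [h1 [h2 h3]].
  unfold Wv, U. unfold Rdiv. rewrite Rpow_mult_distr, pow2_sqrt by lra.
  rewrite <- Rinv_pow by (apply pow_nonzero; lra). rewrite <- pow_mult. reflexivity. Qed.
Lemma Wv_pos a b : inA a b -> 0 < Wv a b.
Proof. intros h. pose proof (sqrtQ_pos a b h). destruct h as [h1 [h2 h3]].
  unfold Wv. apply Rdiv_lt_0_compat; auto. apply pow_lt; lra. Qed.

Lemma Wv_decr b x y : -1 <= b -> b < x -> x < y -> y <= 1 -> Wv y b < Wv x b.
Proof. intros. assert (hx : inA x b) by (red; lra). assert (hy : inA y b) by (red; lra).
  pose proof (U_decr b x y H H0 H1 H2). rewrite <- (Wv_sq _ _ hx), <- (Wv_sq _ _ hy) in H3.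
  pose proof (Wv_pos _ _ hx). pose proof (Wv_pos _ _ hy). nra. Qed.

Lemma K_lt1 a b : inA a b -> K a b < 1.
Proof. intros h. pose proof (Dd_lt a b h). pose proof (sqrtQ_pos a b h). unfold K.
  apply (Rmult_lt_reg_r (sqrt (Q a b))); auto. unfold Rdiv. rewrite Rmult_assoc, Rinv_l by lra. lra. Qed.

Lemma lam_decr b x y : -1 <= b -> b < x -> x < y -> y <= 1 -> lam y b < lam x b.
Proof. intros. assert (hx : inA x b) by (red; lra). assert (hy : inA y b) by (red; lra).
  rewrite (lam_WK _ _ hx), (lam_WK _ _ hy).
  pose proof (Wv_decr b x y H H0 H1 H2). pose proof (K_incr b x y H H0 H1 H2).
  pose proof (Wv_pos _ _ hy). pose proof (K_lt1 _ _ hy). nra. Qed.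

Lemma lam_decr_le b x y : -1 <= b -> b < x -> x <= y -> y <= 1 -> lam y b <= lam x b.
Proof. intros. destruct (Req_dec x y) as [->|]; [lra|]. apply Rlt_le, lam_decr; lra. Qed.

Lemma lam_one b : -1 <= b < 1 -> lam 1 b = 1.
Proof. intros h. unfold lam.
  replace (Q 1 b) with (((3+b)^2*(1-b))^2) by (unfold Q; ring).
  rewrite sqrt_pow2 by (apply Rmult_le_pos; [apply pow2_ge_0|lra]).
  unfold Dd. field. lra. Qed.

Lemma lam_m1 a : -1 < a <= 1 -> lam a (-1) = ((3-a)^2 + 8*(1-a)) / (1+a)^2.
Proof. intros h. unfold lam.
  replace (Q a (-1)) with (((3-a)^2*(1+a))^2) by (unfold Q; ring).
  rewrite sqrt_pow2 by (apply Rmult_le_pos; [apply pow2_ge_0|lra]).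
  unfold Dd. field. lra. Qed.

Lemma lam_ge1 a b : inA a b -> 1 <= lam a b /\ (lam a b = 1 <-> a = 1).
Proof. intros [h1 [h2 h3]].
  destruct (Req_dec a 1) as [->|ha].
  { rewrite lam_one by lra. lra. }
  pose proof (lam_decr b a 1 h1 h2 ltac:(lra) ltac:(lra)). rewrite lam_one in H by lra. lra. Qed.

Lemma mu_ge1 a b : inA a b -> 1 <= mu a b /\ (mu a b = 1 <-> b = -1).
Proof. intros h. rewrite mu_sym. destruct (lam_ge1 _ _ (inA_sym _ _ h)). split; auto. lra. Qed.

Lemma sys_lammu a b : inA a b -> sys a b (lam a b) (mu a b).
Proof. intros h. pose proof (Q_pos a b h). destruct h as [h1 [h2 h3]].
  assert ((a-b)^3 <> 0) by (apply pow_nonzero; lra). split.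
  - unfold lam, mu, Dd. field. fside.
  - unfold lam, mu. replace ((sqrt (Q a b) - Dd a b) / (a - b) ^ 3 + (sqrt (Q a b) + Dd a b) / (a - b) ^ 3) with (2 * sqrt (Q a b) / (a-b)^3) by (field; fside).
    replace ((a-b)^6) with (((a-b)^3)^2) by ring. unfold Rdiv. rewrite !Rpow_mult_distr. rewrite pow2_sqrt by lra.
    rewrite pow_inv. unfold Q. field. fside. Qed.

Lemma sys_inv a b l m : inA a b -> inOmega l m -> sys a b l m -> l = lam a b /\ m = mu a b.
Proof. intros h [hl hm] [e1 e2]. pose proof (Q_pos a b h). destruct h as [h1 [h2 h3]].
  assert (hd : 0 < (a-b)^3) by (apply pow_lt; lra).
  assert (hr : sqrt (Q a b) = (l+m)*(a-b)^3/2).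
  { replace (Q a b) with (((l+m)*(a-b)^3/2)^2).
    - apply sqrt_pow2. apply Rmult_le_pos; [|lra]. apply Rmult_le_pos; lra.
    - replace ((a-b)^6) with (((a-b)^3)^2) in e2 by ring. unfold Q. nra. }
  assert (hD : Dd a b = -(l-m)*(a-b)^3/2) by (unfold Dd; lra).
  unfold lam, mu. rewrite hr, hD. split; field; lra. Qed.

Lemma U_incr2 a b b' : inA a b -> inA a b' -> b < b' -> U a b < U a b'.
Proof. intros [h1 [h2 h3]] [h1' [h2' h3']] hb. rewrite <- (U_sym a b), <- (U_sym a b').
  apply U_decr; lra. Qed.
Lemma K_incr2 a b b' : inA a b -> inA a b' -> b < b' -> K a b < K a b'.
Proof. intros [h1 [h2 h3]] [h1' [h2' h3']] hb. rewrite <- (Ropp_involutive (K a b)), <- (Ropp_involutive (K a b')).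
  rewrite <- (K_sym a b), <- (K_sym a b'). apply Ropp_lt_contravar. apply K_incr; lra. Qed.
Lemma U_le2 a b b' : inA a b -> inA a b' -> b <= b' -> U a b <= U a b'.
Proof. intros. destruct (Req_dec b b') as [->|]; [lra|]. apply Rlt_le, U_incr2; auto; lra. Qed.

Lemma UK_inj a b a' b' : inA a b -> inA a' b' -> U a b = U a' b' -> K a b = K a' b' -> a = a' /\ b = b'.
Proof.
  assert (main : forall a b a' b', inA a b -> inA a' b' -> a < a' -> U a b = U a' b' -> K a b = K a' b' -> False).
  { clear. intros a b a' b' h h' ha hU hK. pose proof h as [h1 [h2 h3]]. pose proof h' as [h1' [h2' h3']].
    destruct (Rle_lt_dec b' b) as [hb|hb].
    - assert (hab' : inA a b') by (red; lra).
      pose proof (U_decr b' a a' h1' ltac:(lra) ha h3'). pose proof (U_le2 a b' b hab' h hb). lra.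
    - assert (ha'b : inA a' b) by (red; lra).
      pose proof (K_incr b a a' h1 h2 ha h3'). pose proof (K_incr2 a' b b' ha'b h' hb). lra. }
  intros h h' hU hK. destruct (Rtotal_order a a') as [ha|[ha|ha]].
  - exfalso; exact (main a b a' b' h h' ha hU hK).
  - rewrite <- ha in *. split; auto. destruct (Rtotal_order b b') as [hb|[hb|hb]]; auto.
    + pose proof (K_incr2 a b b' h h' hb). lra.
    + pose proof (K_incr2 a b' b h' h hb). lra.
  - exfalso; exact (main a' b' a b h' h ha (eq_sym hU) (eq_sym hK)).
Qed.

Lemma lammu_inj a b a' b' : inA a b -> inA a' b' -> lam a b = lam a' b' -> mu a b = mu a' b' -> a = a' /\ b = b'.
Proof. intros h h' e1 e2. apply UK_inj; auto.
  - assert (forall a b, inA a b -> Wv a b = (lam a b + mu a b)/2).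
    { intros x y hx. pose proof (sqrtQ_pos _ _ hx). destruct hx as [? [? ?]]. unfold Wv, lam, mu. field; fside. }
    rewrite <- (Wv_sq _ _ h), <- (Wv_sq _ _ h'), (H _ _ h), (H _ _ h'), e1, e2. reflexivity.
  - assert (forall a b, inA a b -> K a b = (mu a b - lam a b)/(mu a b + lam a b)).
    { intros x y hx. pose proof (sqrtQ_pos _ _ hx). destruct hx as [? [? ?]]. unfold K, lam, mu.
      assert ((x-y)^3 <> 0) by (apply pow_nonzero; lra). field. repeat split; try lra. }
    rewrite (H _ _ h), (H _ _ h'), e1, e2. reflexivity.
Qed.

Lemma cont_pow (f : R -> R) x n : continuous f x -> continuous (fun t => f t ^ n) x.
Proof. intros H. induction n as [|n IH]; simpl.
  - apply continuous_const.
  - apply (continuous_mult f (fun t => f t ^ n) x); auto. Qed.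

Ltac contR := repeat match goal with
 | |- continuous (fun t => @?A t * @?B t) ?x => apply (continuous_mult A B x)
 | |- continuous (fun t => @?A t + @?B t) ?x => apply (continuous_plus A B x)
 | |- continuous (fun t => @?A t - @?B t) ?x => apply (continuous_minus A B x)
 | |- continuous (fun t => - @?A t) ?x => apply (continuous_opp A x)
 | |- continuous (fun t => @?A t ^ ?n) ?x => apply (cont_pow A x n)
 | |- continuous (fun t => @?A t / @?B t) ?x =>
      apply (continuous_mult A (fun t => / B t) x); [|apply (continuous_Rinv_comp B x)]
 | |- continuous (fun t => sqrt (@?A t)) ?x => apply (continuous_sqrt_comp A x)
 | |- continuous (fun t => t) ?x => apply continuous_id
 | |- continuous (fun _ => ?c) ?x => apply continuous_const
 | |- continuous ?f ?x => assumption
 end.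

Lemma lam_cont_a b c : inA c b -> continuity_pt (fun a => lam a b) c.
Proof. intros [h1 [h2 h3]]. apply continuity_pt_filterlim. change (continuous (fun a => lam a b) c). unfold lam, Q, Dd. contR.
  apply pow_nonzero; lra. Qed.
Lemma lam_cont_b a c : c < a -> continuity_pt (fun b => lam a b) c.
Proof. intros h. apply continuity_pt_filterlim. change (continuous (fun b => lam a b) c). unfold lam, Q, Dd. contR.
  apply pow_nonzero; lra. Qed.

Lemma Q_le a b : inA a b -> Q a b <= 2048.
Proof. intros [h1 [h2 h3]]. unfold Q.
  assert (0 <= 3 + a*b <= 4) by nra. assert (0 <= 1 - a*b <= 2) by nra.
  assert (0 <= (3+a*b)^3 <= 64) by (split; [apply pow_le; lra| replace 64 with (4^3) by ring; apply pow_incr; lra]).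
  assert (0 <= 2 + a + b <= 4) by lra. assert (0 <= 2 - a - b <= 4) by lra.
  replace 2048 with (64*2*4*4) by ring.
  apply Rmult_le_compat; try lra. 2: apply Rmult_le_compat; try lra. 3: apply Rmult_le_compat; try lra.
  all: repeat apply Rmult_le_pos; lra.
Qed.

Lemma lam_big b l0 : -1 <= b < 1 -> 1 <= l0 -> exists a1, b < a1 <= 1 /\ l0 <= lam a1 b.
Proof. intros hb hl.
  destruct (Req_dec b (-1)) as [->|hb'].
  { exists (-1 + 1/l0). assert (0 < 1/l0 <= 1). { split; [apply Rdiv_lt_0_compat; lra|]. apply (Rmult_le_reg_r l0); [lra|]. unfold Rdiv. rewrite Rmult_assoc, Rinv_l by lra. lra. }
    split; [lra|]. rewrite lam_m1 by lra.
    replace (1 + (-1 + 1/l0)) with (1/l0) by ring.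
    replace (((3 - (-1 + 1 / l0)) ^ 2 + 8 * (1 - (-1 + 1 / l0))) / (1 / l0) ^ 2) with
      (((3 - (-1 + 1 / l0)) ^ 2 + 8 * (1 - (-1 + 1 / l0))) * l0^2) by (field; lra).
    assert (9 <= (3 - (-1 + 1 / l0)) ^ 2) by nra.
    assert (0 <= 8 * (1 - (-1 + 1 / l0))) by lra. nra. }
  set (c := 108 * ((1-b)/2)^4 * (1+b)^4 / 92).
  assert (hc : 0 < c). { unfold c. apply Rdiv_lt_0_compat; [|lra]. apply Rmult_lt_0_compat; [apply Rmult_lt_0_compat; [lra|]|]; apply pow_lt; lra. }
  set (del := Rmin 1 (Rmin ((1-b)/2) (c/l0))).
  assert (hd1 : 0 < del). { unfold del. apply Rmin_glb_lt; [lra|]. apply Rmin_glb_lt; [lra|]. apply Rdiv_lt_0_compat; lra. }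
  assert (hd2 : del <= 1) by apply Rmin_l.
  assert (hd3 : del <= (1-b)/2) by (unfold del; eapply Rle_trans; [apply Rmin_r|apply Rmin_l]).
  assert (hd4 : del <= c/l0) by (unfold del; eapply Rle_trans; [apply Rmin_r|apply Rmin_r]).
  exists (b + del). split; [lra|].
  assert (h : inA (b+del) b) by (red; lra).
  pose proof (Dd_lt _ _ h) as [e1 e2]. pose proof (Q_le _ _ h). pose proof (sqrtQ_pos _ _ h).
  pose proof (sqrt_sqrt (Q (b+del) b) (Rlt_le _ _ (Q_pos _ _ h))).
  assert (hs : sqrt (Q (b+del) b) <= 46).
  { apply Rsqr_incr_0_var; [|lra]. unfold Rsqr. rewrite H1. lra. }
  assert (hE : 108 * ((1-b)/2)^4 * (1+b)^4 <= Q (b+del) b - Dd (b+del) b ^2).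
  { rewrite E_eq2. assert (0 <= HEs (1 - (b+del)) (1 + b) (b + del - b)) by (apply HEs_pos; lra).
    assert (((1-b)/2)^4 <= (1 - (b+del))^4) by (apply pow_incr; lra).
    assert (0 <= (1+b)^4) by (apply pow_le; lra). nra. }
  assert (hnum : c <= sqrt (Q (b+del) b) - Dd (b+del) b).
  { unfold c. assert (Q (b+del) b - Dd (b+del) b ^2 = (sqrt (Q (b+del) b) - Dd (b+del) b) * (sqrt (Q (b+del) b) + Dd (b+del) b)) by nra.
    apply (Rmult_le_reg_r 92); [lra|]. unfold Rdiv. rewrite Rmult_assoc, Rinv_l, Rmult_1_r by lra. nra. }
  unfold lam. replace (b + del - b) with del by ring.
  assert (del^3 <= del) by (simpl; nra).
  assert (del * l0 <= c) by (apply (Rmult_le_reg_r (/l0)); [apply Rinv_0_lt_compat; lra|]; rewrite Rmult_assoc, Rinv_r, Rmult_1_r by lra; exact hd4).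
  assert (0 < del^3) by (apply pow_lt; lra).
  apply (Rmult_le_reg_r (del^3)); auto. unfold Rdiv. rewrite Rmult_assoc, Rinv_l, Rmult_1_r by lra. nra.
Qed.

Lemma root_ex b l0 : -1 <= b < 1 -> 1 <= l0 -> exists a, b < a <= 1 /\ lam a b = l0.
Proof. intros hb hl. destruct (lam_big b l0 hb hl) as [a1 [ha1 hl1]].
  destruct (Req_dec l0 1) as [->|hl'].
  { exists 1. split; [lra|]. apply lam_one; lra. }
  destruct (Req_dec (lam a1 b) l0) as [e|ne].
  { exists a1; auto. }
  assert (ha1' : a1 < 1). { destruct (Req_dec a1 1) as [->|]; [|lra]. rewrite lam_one in hl1; lra. }
  destruct (Ranalysis5.IVT_interv (fun a => l0 - lam a b) a1 1) as [z [hz ez]].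
  { intros c hc. apply continuity_pt_filterlim. change (continuous (fun a => l0 - lam a b) c).
    apply (continuous_minus (fun _ => l0) (fun a => lam a b) c). apply continuous_const.
    apply continuity_pt_filterlim. apply lam_cont_a. red; lra. }
  { exact ha1'. }
  { simpl. lra. }
  { simpl. rewrite lam_one by lra. lra. }
  exists z. split; [lra|]. simpl in ez. lra.
Qed.

Lemma root_uniq b a a' : -1 <= b -> b < a <= 1 -> b < a' <= 1 -> lam a b = lam a' b -> a = a'.
Proof. intros hb ha ha' e. destruct (Rtotal_order a a') as [h|[h|h]]; auto.
  - pose proof (lam_decr b a a' hb ltac:(lra) h ltac:(lra)). lra.
  - pose proof (lam_decr b a' a hb ltac:(lra) h ltac:(lra)). lra.
Qed.

Definition Aof (l0 b : R) : R := epsilon (inhabits 0) (fun a => b < a <= 1 /\ lam a b = l0).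

Lemma Aof_spec l0 b : -1 <= b < 1 -> 1 <= l0 -> b < Aof l0 b <= 1 /\ lam (Aof l0 b) b = l0.
Proof. intros. unfold Aof. apply epsilon_spec. apply root_ex; auto. Qed.

Definition clamp (b1 t : R) := Rmax (-1) (Rmin b1 t).

Lemma clamp_range b1 t : -1 <= b1 -> -1 <= clamp b1 t <= b1.
Proof. intros. unfold clamp, Rmax, Rmin. repeat destruct Rle_dec; lra. Qed.
Lemma clamp_id b1 t : -1 <= t <= b1 -> clamp b1 t = t.
Proof. intros. unfold clamp, Rmax, Rmin. repeat destruct Rle_dec; lra. Qed.
Lemma clamp_lip b1 t s : -1 <= b1 -> Rabs (clamp b1 t - clamp b1 s) <= Rabs (t - s).
Proof. intros. unfold clamp, Rmax, Rmin. repeat destruct Rle_dec; unfold Rabs; repeat destruct Rcase_abs; lra. Qed.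

Lemma cont_of_ed (f : R -> R) x0 : (forall eps, 0 < eps -> exists del, 0 < del /\ forall x, Rabs (x - x0) < del -> Rabs (f x - f x0) < eps) -> continuity_pt f x0.
Proof. intros H eps He. destruct (H eps He) as [d [Hd H']]. exists d. split; [lra|].
  intros x [_ hx]. simpl in *. unfold R_dist in *. apply H'; auto. Qed.
Lemma ed_of_cont (f : R -> R) x0 : continuity_pt f x0 -> forall eps, 0 < eps -> exists del, 0 < del /\ forall x, Rabs (x - x0) < del -> Rabs (f x - f x0) < eps.
Proof. intros H eps He. destruct (H eps He) as [d [Hd H']]. exists d. split; [lra|].
  intros x hx. destruct (Req_dec x x0) as [->|ne].
  - rewrite Rminus_diag, Rabs_R0; lra.
  - apply (H' x). split; [split; [exact I| auto]|]. exact hx. Qed.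

Lemma clamp_cont b1 t0 : -1 <= b1 -> continuity_pt (clamp b1) t0.
Proof. intros hb. apply cont_of_ed. intros eps he. exists eps. split; auto.
  intros x hx. pose proof (clamp_lip b1 x t0 hb). lra. Qed.

Lemma Aeff_cont l0 b1 t0 : -1 <= b1 < 1 -> 1 <= l0 -> continuity_pt (fun t => Aof l0 (clamp b1 t)) t0.
Proof. intros hb1 hl. apply cont_of_ed. intros eps he.
  set (c := clamp b1 t0). pose proof (clamp_range b1 t0 ltac:(lra)) as hc. fold c in hc.
  set (a0 := Aof l0 c). destruct (Aof_spec l0 c ltac:(lra) hl) as [ha0 ea0]. fold a0 in ha0, ea0.
  set (e := Rmin eps (a0 - c) / 2).
  assert (he1 : 0 < e) by (unfold e, Rmin; destruct Rle_dec; lra).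
  assert (he2 : e < eps) by (unfold e, Rmin; destruct Rle_dec; lra).
  assert (he3 : e <= (a0 - c)/2) by (unfold e, Rmin; destruct Rle_dec; lra).
  set (aL := a0 - e).
  assert (hL : l0 < lam aL c) by (rewrite <- ea0; apply lam_decr; unfold aL; lra).
  destruct (ed_of_cont _ _ (lam_cont_b aL c ltac:(unfold aL; lra)) (lam aL c - l0) ltac:(lra)) as [d1 [hd1 H1]].
  assert (hup : exists d3, 0 < d3 /\ forall s, Rabs (s - c) < d3 -> a0 + e <= 1 -> lam (a0+e) s < l0).
  { destruct (Rle_dec (a0 + e) 1) as [hle|hgt].
    - assert (hU : lam (a0+e) c < l0) by (rewrite <- ea0; apply lam_decr; lra).
      destruct (ed_of_cont _ _ (lam_cont_b (a0+e) c ltac:(lra)) (l0 - lam (a0+e) c) ltac:(lra)) as [d3 [hd3 H3]].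
      exists d3. split; auto. intros s hs _. specialize (H3 s hs). apply Rabs_def2 in H3. lra.
    - exists 1. split; [lra|]. intros; lra. }
  destruct hup as [d3 [hd3 H3]].
  exists (Rmin d1 (Rmin (aL - c) d3)). split.
  { apply Rmin_glb_lt; auto. apply Rmin_glb_lt; auto. unfold aL; lra. }
  intros x hx.
  assert (hx1 : Rabs (x - t0) < d1) by (eapply Rlt_le_trans; [exact hx| apply Rmin_l]).
  assert (hx2 : Rabs (x - t0) < aL - c) by (eapply Rlt_le_trans; [exact hx| eapply Rle_trans; [apply Rmin_r| apply Rmin_l]]).
  assert (hx3 : Rabs (x - t0) < d3) by (eapply Rlt_le_trans; [exact hx| eapply Rle_trans; [apply Rmin_r| apply Rmin_r]]).
  set (s := clamp b1 x). pose proof (clamp_lip b1 x t0 ltac:(lra)) as hs. fold s c in hs.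
  pose proof (clamp_range b1 x ltac:(lra)) as hsr. fold s in hsr.
  destruct (Aof_spec l0 s ltac:(lra) hl) as [ha1 ea1]. fold c a0.
  assert (hsc : Rabs (s - c) < aL - c) by lra.
  apply Rabs_def2 in hsc. destruct hsc as [hsc1 hsc2].
  assert (hlow : aL < Aof l0 s).
  { destruct (Rlt_le_dec aL (Aof l0 s)) as [h|h]; auto. exfalso.
    specialize (H1 s ltac:(lra)). apply Rabs_def2 in H1.
    pose proof (lam_decr_le s (Aof l0 s) aL ltac:(lra) ltac:(lra) h ltac:(unfold aL; lra)). lra. }
  assert (hhigh : Aof l0 s < a0 + e).
  { destruct (Rlt_le_dec (Aof l0 s) (a0 + e)) as [h|h]; auto. exfalso.
    assert (a0 + e <= 1) by lra.
    specialize (H3 s ltac:(lra) H).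
    unfold aL in hsc1. pose proof (lam_decr_le s (a0+e) (Aof l0 s) ltac:(lra) ltac:(lra) h ltac:(lra)). lra. }
  apply Rabs_def1; unfold aL in hlow; lra.
Qed.

Definition Gf l0 b1 t := l0 + 2 * Dd (Aof l0 (clamp b1 t)) (clamp b1 t) / (Aof l0 (clamp b1 t) - clamp b1 t)^3.

Lemma G_eq l0 b1 t : -1 <= b1 < 1 -> 1 <= l0 -> Gf l0 b1 t = mu (Aof l0 (clamp b1 t)) (clamp b1 t).
Proof. intros hb hl. pose proof (clamp_range b1 t ltac:(lra)).
  destruct (Aof_spec l0 (clamp b1 t) ltac:(lra) hl) as [h1 h2].
  unfold Gf. rewrite <- h2 at 1. unfold lam, mu. field. lra. Qed.

Lemma G_cont l0 b1 t0 : -1 <= b1 < 1 -> 1 <= l0 -> continuity_pt (Gf l0 b1) t0.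
Proof. intros hb hl. pose proof (clamp_range b1 t0 ltac:(lra)).
  destruct (Aof_spec l0 (clamp b1 t0) ltac:(lra) hl) as [h1 h2].
  assert (c1 : continuous (fun t => Aof l0 (clamp b1 t)) t0) by (apply continuity_pt_filterlim, Aeff_cont; auto).
  assert (c2 : continuous (fun t => clamp b1 t) t0) by (apply continuity_pt_filterlim, clamp_cont; lra).
  apply continuity_pt_filterlim. change (continuous (fun t => Gf l0 b1 t) t0). unfold Gf, Dd. contR.
  apply pow_nonzero; lra. Qed.

Lemma mu_big a b : 0 <= b -> b < a <= 1 -> 7 / (1-b)^2 <= mu a b.
Proof. intros hb ha. assert (h : inA a b) by (red; lra).
  assert (hD : 0 <= Dd a b) by (unfold Dd; apply Rmult_le_pos; [apply Rmult_le_pos|]; nra).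
  assert (hQ : 49 * (1-b)^2 <= Q a b).
  { unfold Q. assert (27 <= (3+a*b)^3) by (replace 27 with (3^3) by ring; apply pow_incr; nra).
    assert (1 - b <= 1 - a*b) by nra. assert (2 <= 2+a+b) by lra. assert (1-b <= 2-a-b) by lra.
    apply Rle_trans with (27 * (1-b) * 2 * (1-b)). { simpl; nra. }
    repeat (apply Rmult_le_compat; try nra). }
  assert (hs : 7 * (1-b) <= sqrt (Q a b)).
  { rewrite <- (sqrt_pow2 (7*(1-b))) by lra. apply sqrt_le_1_alt. simpl; nra. }
  assert (0 < (a-b)^3) by (apply pow_lt; lra).
  assert ((a-b)^3 <= (1-b)^3) by (apply pow_incr; lra).
  unfold mu. apply Rle_trans with (7 * (1-b) / (1-b)^3).
  { right. field. lra. }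
  apply Rle_trans with (7 * (1-b) / (a-b)^3).
  { unfold Rdiv. apply Rmult_le_compat_l; [lra|]. apply Rinv_le_contravar; auto. }
  unfold Rdiv. apply Rmult_le_compat_r; [left; apply Rinv_0_lt_compat; auto| lra].
Qed.

Lemma surj l0 m0 : inOmega l0 m0 -> exists a b, inA a b /\ lam a b = l0 /\ mu a b = m0.
Proof. intros [hl hm].
  destruct (Req_dec m0 1) as [->|hm'].
  { destruct (Aof_spec l0 (-1) ltac:(lra) hl) as [h1 h2].
    exists (Aof l0 (-1)), (-1). assert (h : inA (Aof l0 (-1)) (-1)) by (red; lra).
    split; auto. split; auto. apply (proj2 (mu_ge1 _ _ h)). reflexivity. }
  set (b1 := 1 - 1/m0).
  assert (hb1 : 0 <= b1 < 1).
  { unfold b1. assert (0 < 1/m0) by (apply Rdiv_lt_0_compat; lra).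
    assert (1/m0 <= 1). { apply (Rmult_le_reg_r m0); [lra|]. unfold Rdiv. rewrite Rmult_assoc, Rinv_l by lra. lra. }
    lra. }
  assert (e1 : Gf l0 b1 (-1) - m0 < 0).
  { rewrite G_eq by lra. rewrite clamp_id by lra.
    destruct (Aof_spec l0 (-1) ltac:(lra) hl) as [h1 h2].
    assert (h : inA (Aof l0 (-1)) (-1)) by (red; lra).
    rewrite (proj2 (proj2 (mu_ge1 _ _ h)) eq_refl). lra. }
  assert (e2 : 0 < Gf l0 b1 b1 - m0).
  { rewrite G_eq by lra. rewrite clamp_id by lra.
    destruct (Aof_spec l0 b1 ltac:(lra) hl) as [h1 h2].
    pose proof (mu_big (Aof l0 b1) b1 ltac:(lra) h1).
    replace (7 / (1 - b1)^2) with (7 * m0^2) in H by (unfold b1; field; lra). nra. }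
  destruct (Ranalysis5.IVT_interv (fun t => Gf l0 b1 t - m0) (-1) b1) as [z [hz ez]].
  { intros c hc. apply continuity_pt_filterlim. change (continuous (fun t => Gf l0 b1 t - m0) c).
    apply (continuous_minus (fun t => Gf l0 b1 t) (fun _ => m0) c); [|apply continuous_const].
    apply continuity_pt_filterlim. apply G_cont; lra. }
  { lra. }
  { exact e1. }
  { exact e2. }
  simpl in ez. rewrite G_eq in ez by lra. rewrite clamp_id in ez by lra.
  destruct (Aof_spec l0 z ltac:(lra) hl) as [h1 h2].
  exists (Aof l0 z), z. split; [red; lra|]. split; auto. lra.
Qed.

Theorem theorem3p2 :
  (forall a al : R, inA a al ->
     exists! p : R * R, inOmega (fst p) (snd p) /\ sys a al (fst p) (snd p))
  /\
  (forall l m : R, inOmega l m ->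
     exists! q : R * R, inA (fst q) (snd q) /\ sys (fst q) (snd q) l m)
  /\
  (forall a al l m : R, inA a al -> inOmega l m -> sys a al l m ->
     ((-1 < al /\ a < 1) <-> (1 < l /\ 1 < m))
     /\ (a = 1 <-> l = 1)
     /\ (al = -1 <-> m = 1)
     /\ ((a = 1 /\ al = -1) <-> (l = 1 /\ m = 1))).
Proof.
  split; [|split].
  - intros a al h. exists (lam a al, mu a al). simpl. split.
    + split; [split; [apply (lam_ge1 _ _ h)| apply (mu_ge1 _ _ h)]|]. apply sys_lammu; auto.
    + intros [l m] [ho hs]. simpl in *. destruct (sys_inv a al l m h ho hs) as [-> ->]. reflexivity.
  - intros l m ho. destruct (surj l m ho) as [a [b [h [e1 e2]]]].
    exists (a, b). simpl. split.
    + split; auto. rewrite <- e1, <- e2. apply sys_lammu; auto.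
    + intros [a' b'] [h' hs]. simpl in *. destruct (sys_inv a' b' l m h' ho hs) as [e1' e2'].
      destruct (lammu_inj a b a' b' h h' ltac:(congruence) ltac:(congruence)) as [-> ->]. reflexivity.
  - intros a al l m h ho hs. destruct (sys_inv a al l m h ho hs) as [-> ->].
    destruct (lam_ge1 _ _ h) as [l1 l2]. destruct (mu_ge1 _ _ h) as [m1 m2].
    destruct h as [h1 [h2 h3]].
    split; [|split; [|split]].
    + split.
      * intros [x y]. split.
        -- destruct (Req_dec (lam a al) 1) as [e|e]; [apply l2 in e; lra| lra].
        -- destruct (Req_dec (mu a al) 1) as [e|e]; [apply m2 in e; lra| lra].
      * intros [x y]. split.
        -- destruct (Req_dec al (-1)) as [e|e]; [apply m2 in e; lra| lra].
        -- destruct (Req_dec a 1) as [e|e]; [apply l2 in e; lra| lra].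
    + exact (conj (proj2 l2) (proj1 l2)).
    + exact (conj (proj2 m2) (proj1 m2)).
    + split; intros [x y]; split; try (apply l2; auto); try (apply m2; auto).
Qed.
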